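(* In the Waterfilling bucketing construction described in the context, let $A$ be the joint strategy matrix produced for a set of analysts and let $A'$ be the joint strategy matrix produced after additionally adding one analyst with weight $s_i>0$ and strategy matrix $A_i$ every column of which has $L_1$ norm $1$. Then $\|A'\|_1=\|A\|_1+s_i$.
   Context: Matrices have $n$ columns. For a matrix $M$, $\|M\|_1$ is the maximum over columns of the column's $L_1$ norm. Fix a norm $\|\cdot\|$ on row vectors. Each analyst $l$ has a weight $s_l>0$ and a strategy matrix $A_l$ whose every column has $L_1$ norm $1$. Bucketing: maintain a set $B$ of unit vectors $e$ with weights $f_B(e)>0$, initially empty; processing analyst $l$ means, for each nonzero row $v$ of $s_lA_l$, setting $e=v/\|v\|$ and, if $e\in B$, increasing $f_B(e)$ by $\|v\|$, otherwise adding $e$ to $B$ with $f_B(e)=\|v\|$. The joint strategy matrix has one row $f_B(e)e$ for each $e\in B$. *)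

(* Defs.v *)
From HB Require Import structures.
From mathcomp Require Import all_boot all_order all_algebra.
Set Implicit Arguments. Unset Strict Implicit. Unset Printing Implicit Defensive.
Import Order.TTheory GRing.Theory Num.Theory.
Local Open Scope ring_scope.

Section Waterfilling.
Variables (R : realFieldType) (n : nat).

Definition is_norm (N : 'rV[R]_n -> R) : Prop :=
  [/\ forall x y, N (x + y) <= N x + N y,
      forall (a : R) x, N (a *: x) = `|a| * N x
    & forall x, N x = 0 -> x = 0].

Definition norm1 (m : nat) (M : 'M[R]_(m, n)) : R :=
  \big[Num.max/0]_(j < n) \sum_(i < m) `|M i j|.

Definition cols_L1_one (m : nat) (M : 'M[R]_(m, n)) : Prop :=
  forall j : 'I_n, \sum_(i < m) `|M i j| = 1.

Record analyst := Analyst {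
  an_weight : R;
  an_rows : nat;
  an_strat : 'M[R]_(an_rows, n) }.

(* A bucket set B: a list of pairs (e, f_B(e)) with distinct unit vectors e. *)
Definition buckets := seq ('rV[R]_n * R).

Definition bucket_row (N : 'rV[R]_n -> R) (B : buckets) (v : 'rV[R]_n)
  : buckets :=
  if v == 0 then B else
  let e := (N v)^-1 *: v in
  if e \in map fst B then
    map (fun p => if p.1 == e then (p.1, p.2 + N v) else p) B
  else rcons B (e, N v).

Definition bucket_analyst (N : 'rV[R]_n -> R) (B : buckets) (a : analyst)
  : buckets :=
  foldl (fun B' (i : 'I_(an_rows a)) =>
           bucket_row N B' (row i (an_weight a *: an_strat a)))
        B (enum 'I_(an_rows a)).

Definition bucketing (N : 'rV[R]_n -> R) (ans : seq analyst) : buckets :=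
  foldl (bucket_analyst N) [::] ans.

Definition joint_matrix (B : buckets) : 'M[R]_(size B, n) :=
  \matrix_(k < size B, j < n) ((nth (0, 0) B k).2 * (nth (0, 0) B k).1 0 j).

End Waterfilling.

(* Membership of an analyst in a list (analysts do not form an eqType). *)
Fixpoint in_list (T : Type) (x : T) (s : seq T) : Prop :=
  if s is y :: s' then y = x \/ in_list x s' else False.

(* Main.v *)
Require Import Defs.
From HB Require Import structures.
From mathcomp Require Import all_boot all_order all_algebra.
Import Order.TTheory GRing.Theory Num.Theory.
Local Open Scope ring_scope.

Section Aux.
Variables (R : realFieldType) (n : nat) (N : 'rV[R]_n -> R).
Hypothesis hN : is_norm N.

Lemma N_ge0 x : 0 <= N x.
Proof.
case: hN => Htri Hsc _.
have H0 : N 0 = 0 by rewrite -(scale0r (0 : 'rV[R]_n)) Hsc normr0 mul0r.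
have := Htri x (- x); rewrite subrr H0 -scaleN1r Hsc normrN normr1 mul1r.
by move=> h; rewrite -(@pmulr_rge0 _ 2) // mulr2n mulrDl mul1r.
Qed.

Lemma N_gt0 v : v != 0 -> 0 < N v.
Proof.
move=> hv; rewrite lt_def N_ge0 andbT; apply/eqP => h.
by case: hN => _ _ h3; move/eqP: hv; apply; apply: h3.
Qed.

Definition colsum (B : buckets R n) (j : 'I_n) :=
  \sum_(p <- B) `|p.2 * p.1 0 j|.

Definition inv (B : buckets R n) :=
  uniq (map fst B) && all (fun p => 0 <= p.2) B.

Lemma row_step B v : inv B ->
  inv (bucket_row N B v) /\
  forall j, colsum (bucket_row N B v) j = colsum B j + `|v 0 j|.
Proof.
move=> /andP[hu ha]; rewrite /bucket_row.
have [->|hv] := eqVneq v 0.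
  by split; [apply/andP|move=> j; rewrite mxE normr0 addr0].
have hNv := @N_gt0 v hv.
set e := (N v)^-1 *: v.
have key j : N v * `|e 0 j| = `|v 0 j|.
  rewrite /e mxE normrM normfV (gtr0_norm hNv) mulrA mulfV ?mul1r //.
  by rewrite gt_eqF.
case: ifP => he.
  split.
    apply/andP; split.
      rewrite -map_comp; rewrite (eq_map (g := fst)) //.
      by move=> p /=; case: ifP.
    apply/allP => p /mapP [q qB ->]; have := allP ha q qB.
    case: ifP => //= _ h; apply: addr_ge0 => //; exact: N_ge0.
  move=> j; rewrite /colsum big_map.
  transitivity (\sum_(p <- B) (`|p.2 * p.1 0 j| + (p.1 == e)%:R * `|v 0 j|)).
    apply: eq_big_seq => p pB; case: ifP => /= [/eqP ->|_].
      rewrite mul1r -key !normrM (ger0_norm (allP ha p pB)).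
      rewrite ger0_norm; last by apply: addr_ge0; [exact: (allP ha p pB)|exact: N_ge0].
      by rewrite mulrDl.
    by rewrite mul0r addr0.
  rewrite big_split /=; congr (_ + _).
  rewrite -big_distrl /= -natr_sum.
  have -> : (\sum_(p <- B) ((p.1 == e) : nat))%N = 1%N.
    apply: etrans (_ : _ = count (pred1 e) (map fst B)) _; last first.
      by rewrite count_uniq_mem // he.
    rewrite count_map -sum1_count [RHS]big_mkcond /=.
    by apply: eq_bigr => p _; case: (_ == _).
  by rewrite mul1r.
split.
  apply/andP; split.
    by rewrite map_rcons rcons_uniq he hu.
  by rewrite all_rcons /= ha N_ge0.
move=> j; rewrite /colsum big_rcons /= addrC -key normrM (gtr0_norm hNv).
by rewrite addrC.
Qed.

Lemma rows_step m (M : 'M[R]_(m, n)) (r : seq 'I_m) B : inv B ->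
  inv (foldl (fun B' i => bucket_row N B' (row i M)) B r) /\
  forall j, colsum (foldl (fun B' i => bucket_row N B' (row i M)) B r) j
            = colsum B j + \sum_(i <- r) `|M i j|.
Proof.
elim: r B => [|i r IH] B hB /=.
  by split => // j; rewrite big_nil addr0.
have [h1 h2] := @row_step B (row i M) hB.
have [h3 h4] := IH _ h1; split => // j.
by rewrite h4 h2 big_cons mxE addrA.
Qed.

Lemma analyst_step (a : analyst R n) B : inv B -> 0 < an_weight a ->
  cols_L1_one (an_strat a) ->
  inv (bucket_analyst N B a) /\
  forall j, colsum (bucket_analyst N B a) j = colsum B j + an_weight a.
Proof.
move=> hB hs h1; rewrite /bucket_analyst.
have [h3 h4] := @rows_step _ (an_weight a *: an_strat a) (enum 'I_(an_rows a)) _ hB.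
split => // j; rewrite h4; congr (_ + _).
rewrite big_enum /=.
under eq_bigr => i _ do rewrite mxE normrM (gtr0_norm hs).
by rewrite -mulr_sumr h1 mulr1.
Qed.

Lemma all_step (ans : seq (analyst R n)) :
  (forall l, in_list l ans -> 0 < an_weight l /\ cols_L1_one (an_strat l)) ->
  forall B, inv B -> (exists c, forall j, colsum B j = c) ->
  inv (foldl (bucket_analyst N) B ans) /\
  exists c, forall j, colsum (foldl (bucket_analyst N) B ans) j = c.
Proof.
elim: ans => [|l ans IH] hl B hB [c hc] /=; first by split => //; exists c.
have [hs h1] := hl l (or_introl erefl).
have [h2 h3] := @analyst_step l B hB hs h1.
apply: IH.
- by move=> l' hl'; apply: hl; right.
- exact: h2.
- by exists (c + an_weight l) => j; rewrite h3 hc.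
Qed.

Lemma norm1_joint (B : buckets R n) j :
  \sum_(k < size B) `|joint_matrix B k j| = colsum B j.
Proof.
rewrite /colsum (big_nth (0, 0)) big_mkord.
by apply: eq_bigr => k _; rewrite mxE.
Qed.

Lemma bigmax_const (c : R) : (0 < n)%N -> 0 <= c ->
  \big[Num.max/0]_(j < n) c = c.
Proof.
move=> hn hc; rewrite big_const_ord.
case: n hn => // k _ /=.
elim: k => [|k IH] /=; first by rewrite max_l.
by rewrite IH maxxx.
Qed.

End Aux.

Theorem mainTheorem4 (R : realFieldType) (n : nat) (N : 'rV[R]_n -> R)
  (ans : seq (analyst R n)) (a : analyst R n) :
  (0 < n)%N ->
  is_norm N ->
  (forall l, in_list l ans -> 0 < an_weight l /\ cols_L1_one (an_strat l)) ->
  0 < an_weight a -> cols_L1_one (an_strat a) ->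
  norm1 (joint_matrix (bucketing N (rcons ans a)))
  = norm1 (joint_matrix (bucketing N ans)) + an_weight a.
Proof.
move=> hn hN hl hs h1.
have h0 : exists c, forall j, @colsum R n (@nil ('rV[R]_n * R)) j = c.
  by exists 0 => j; rewrite /colsum big_nil.
have [hB [c hc]] := @all_step R n N hN ans hl [::] erefl h0.
rewrite /bucketing foldl_rcons.
have [_ h2] := @analyst_step R n N hN a _ hB hs h1.
have hc0 : 0 <= c.
  rewrite -(hc (Ordinal hn)) /colsum; apply: sumr_ge0 => p _; exact: normr_ge0.
rewrite /norm1.
under eq_bigr => j _ do rewrite norm1_joint h2 hc.
under [in RHS]eq_bigr => j _ do rewrite norm1_joint hc.
rewrite !bigmax_const //.
by apply: addr_ge0 => //; apply: ltW.
Qed.
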